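(* Let $\alpha\in(0,\pi/2]$ and define the polynomial $$\begin{aligned} p_1(d)&=-32\sin^6\alpha\,d^{12}+256\sin^6\alpha\,d^{10}-1184\sin^6\alpha\,d^8\\ &\quad-96\sin^3\alpha\big(-40\alpha+9\sin\alpha+20\sin2\alpha+7\sin3\alpha-30\alpha\cos\alpha\big)d^6\\ &\quad+96\sin^3\alpha\big(-160\alpha+99\sin\alpha+80\sin2\alpha+7\sin3\alpha-120\alpha\cos\alpha\big)d^4\\ &\quad+13440(\alpha-\sin\alpha)\sin^5\alpha\,\csc^2\Big(\frac{\alpha}{2}\Big)d^2\\ &\quad-1800\big(6\alpha+8\alpha\cos\alpha-2\sin\alpha(3\cos\alpha+4)\big)^2, \end{aligned}$$ and let $p(x)=p_1(\sqrt{x})$, a polynomial of degree $6$ in $x$. Let $d_{max}=\csc(\alpha/2)\sqrt{5(\alpha\csc\alpha-1)}$. Let $q(x)=x^6-8x^5+37x^4-134x^3+284x^2-280x+100$; its real zeros are $1$ (a double zero) and two further zeros $x_3<x_4$ (numerically $x_3\approx2.1842$, $x_4\approx3.2872$). Then $p$ has at most four positive zeros on $(0,d_{max}^2)$. Moreover, if with $y_0=0$, $y_1=1$, $y_2=x_3$, $y_3=x_4$, $y_4=d_{max}^2$ the values $p(y_0),p(y_1),p(y_2),p(y_3),p(y_4)$ are of alternating signs, then $p$ has precisely four positive zeros.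
   Context: Here $\csc=1/\sin$. *)

(* Defs.v *)
From Stdlib Require Import Reals Lra List.
Open Scope R_scope.

Definition csc (t : R) : R := / sin t.

Definition p1 (a d : R) : R :=
  - 32 * sin a ^ 6 * d ^ 12 + 256 * sin a ^ 6 * d ^ 10 - 1184 * sin a ^ 6 * d ^ 8
  - 96 * sin a ^ 3 * (- 40 * a + 9 * sin a + 20 * sin (2 * a) + 7 * sin (3 * a)
                      - 30 * a * cos a) * d ^ 6
  + 96 * sin a ^ 3 * (- 160 * a + 99 * sin a + 80 * sin (2 * a) + 7 * sin (3 * a)
                      - 120 * a * cos a) * d ^ 4
  + 13440 * (a - sin a) * sin a ^ 5 * (csc (a / 2)) ^ 2 * d ^ 2
  - 1800 * (6 * a + 8 * a * cos a - 2 * sin a * (3 * cos a + 4)) ^ 2.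

(* p(x) = p_1(sqrt x), written out as the degree-6 polynomial in x = d^2
   (so it is also defined, as a polynomial, for x < 0). *)
Definition p (a x : R) : R :=
  - 32 * sin a ^ 6 * x ^ 6 + 256 * sin a ^ 6 * x ^ 5 - 1184 * sin a ^ 6 * x ^ 4
  - 96 * sin a ^ 3 * (- 40 * a + 9 * sin a + 20 * sin (2 * a) + 7 * sin (3 * a)
                      - 30 * a * cos a) * x ^ 3
  + 96 * sin a ^ 3 * (- 160 * a + 99 * sin a + 80 * sin (2 * a) + 7 * sin (3 * a)
                      - 120 * a * cos a) * x ^ 2
  + 13440 * (a - sin a) * sin a ^ 5 * (csc (a / 2)) ^ 2 * x
  - 1800 * (6 * a + 8 * a * cos a - 2 * sin a * (3 * cos a + 4)) ^ 2.

Definition dmax (a : R) : R := csc (a / 2) * sqrt (5 * (a * csc a - 1)).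

Definition q (x : R) : R :=
  x ^ 6 - 8 * x ^ 5 + 37 * x ^ 4 - 134 * x ^ 3 + 284 * x ^ 2 - 280 * x + 100.

Definition zero_in (a x : R) : Prop := 0 < x < dmax a ^ 2 /\ p a x = 0.

(* Main.v *)
Require Import Defs.
From Stdlib Require Import Reals List.
Open Scope R_scope.
From Stdlib Require Import Reals Lra Lia Sorted List.
From Stdlib Require Import FunctionalExtensionality.
From Coquelicot Require Coquelicot.

Fixpoint ins (x:R) (l:list R) : list R :=
  match l with nil => x::nil | y::t => if Rlt_dec x y then x::y::t else y :: ins x t end.

Lemma ins_in x l z : In z (ins x l) <-> z = x \/ In z l.
Proof.
  induction l as [|y t IH]; simpl. { split; intros H; intuition. }
  destruct (Rlt_dec x y); simpl; rewrite ?IH; intuition.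
Qed.

Lemma ins_len x l : length (ins x l) = S (length l).
Proof. induction l as [|y t IH]; simpl; auto. destruct (Rlt_dec x y); simpl; auto. Qed.

Lemma ins_sorted x l : StronglySorted Rlt l -> ~ In x l -> StronglySorted Rlt (ins x l).
Proof.
  induction l as [|y t IH]; simpl; intros Hs Hn.
  - constructor; constructor.
  - apply StronglySorted_inv in Hs as [Hs Hf].
    destruct (Rlt_dec x y) as [h|h].
    + constructor; [constructor; auto|].
      constructor; auto. rewrite List.Forall_forall in *. intros z Hz. specialize (Hf z Hz). lra.
    + constructor; [apply IH; tauto|].
      rewrite List.Forall_forall in *. intros z Hz. apply ins_in in Hz as [->|Hz]; auto.
      assert (x <> y) by (intro; apply Hn; auto). lra.
Qed.

Lemma sort_exists l : NoDup l -> exists l', StronglySorted Rlt l' /\ length l' = length l /\ incl l' l.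
Proof.
  induction l as [|x t IH]; intros Hn.
  - exists nil. repeat split; [constructor| intros z Hz; inversion Hz].
  - inversion Hn; subst. destruct (IH H2) as [l' [K1 [K3 K4]]].
    exists (ins x l'). split; [apply ins_sorted; auto; intro HH; apply H1, K4, HH|]. split.
    + rewrite ins_len; simpl; auto.
    + intros z Hz. apply ins_in in Hz as [->|Hz]; simpl; auto.
Qed.

Lemma rolle_list (f f' : R -> R) : (forall x, derivable_pt_lim f x (f' x)) ->
  forall l x0, StronglySorted Rlt (x0 :: l) -> List.Forall (fun x => f x = 0) (x0 :: l) ->
  exists l', StronglySorted Rlt l' /\ length l' = length l /\ List.Forall (fun x => f' x = 0) l'
    /\ List.Forall (Rlt x0) l'.
Proof.
  intros Hd. induction l as [|y t IH]; intros x0 Hs Hz.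
  - exists nil. repeat split; constructor.
  - apply StronglySorted_inv in Hs as [Hs Hf]. inversion Hf; subst.
    inversion Hz; subst.
    destruct (IH y Hs H4) as [l' [A [B [C D]]]].
    destruct (MVT_cor2 f f' x0 y H1 (fun c _ => Hd c)) as [c [Hc1 Hc2]].
    inversion H4; subst.
    exists (c :: l'). split; [|split; [simpl; auto|split]].
    + constructor; auto. rewrite List.Forall_forall in *. intros z Hz'. specialize (D z Hz'). lra.
    + constructor; auto. assert (f' c * (y - x0) = 0) by (rewrite <- Hc1; lra).
      apply Rmult_integral in H as [H|H]; auto. lra.
    + constructor; [lra|]. rewrite List.Forall_forall in *. intros z Hz'. specialize (D z Hz'). lra.
Qed.

Lemma rolle_list' (f f' : R -> R) : (forall x, derivable_pt_lim f x (f' x)) ->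
  forall l, StronglySorted Rlt l -> List.Forall (fun x => f x = 0) l ->
  exists l', StronglySorted Rlt l' /\ length l' = pred (length l) /\ List.Forall (fun x => f' x = 0) l'.
Proof.
  intros Hd [|x0 l] Hs Hz.
  - exists nil. repeat split; constructor.
  - destruct (rolle_list f f' Hd l x0 Hs Hz) as [l' [A [B [C _]]]]. exists l'; auto.
Qed.

Definition pol (c0 c1 c2 c3 c4 c5 c6 x : R) :=
  c0 + c1*x + c2*x^2 + c3*x^3 + c4*x^4 + c5*x^5 + c6*x^6.

Module Aux.
Import Coquelicot.Coquelicot.
Lemma pol_deriv c0 c1 c2 c3 c4 c5 c6 x :
  derivable_pt_lim (pol c0 c1 c2 c3 c4 c5 c6) x (pol c1 (2*c2) (3*c3) (4*c4) (5*c5) (6*c6) 0 x).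
Proof. apply is_derive_Reals. unfold pol. auto_derive; auto. ring. Qed.
Lemma g_deriv x : derivable_pt_lim (fun t => 3*t - 4*sin t + sin t * cos t) x
   (3 - 4 * cos x + cos x * cos x - sin x * sin x).
Proof. apply is_derive_Reals. auto_derive; auto. ring. Qed.
End Aux.
Import Aux.

Lemma pol_few c0 c1 c2 c3 c4 c5 c6 :
  (forall x, 24*c4 + 120*c5*x + 360*c6*x^2 <> 0) ->
  forall l, NoDup l -> List.Forall (fun x => pol c0 c1 c2 c3 c4 c5 c6 x = 0) l -> (length l <= 4)%nat.
Proof.
  intros Hn l Hl Hz.
  destruct (sort_exists l Hl) as [l0 [S0 [L0 I0]]].
  assert (Z0 : List.Forall (fun x => pol c0 c1 c2 c3 c4 c5 c6 x = 0) l0).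
  { rewrite List.Forall_forall in *. auto. }
  destruct (rolle_list' _ _ (pol_deriv c0 c1 c2 c3 c4 c5 c6) l0 S0 Z0) as [l1 [S1 [L1 Z1]]].
  destruct (rolle_list' _ _ (pol_deriv _ _ _ _ _ _ _) l1 S1 Z1) as [l2 [S2 [L2 Z2]]].
  destruct (rolle_list' _ _ (pol_deriv _ _ _ _ _ _ _) l2 S2 Z2) as [l3 [S3 [L3 Z3]]].
  destruct (rolle_list' _ _ (pol_deriv _ _ _ _ _ _ _) l3 S3 Z3) as [l4 [S4 [L4 Z4]]].
  destruct l4 as [|z l4]; [simpl in L4; lia|].
  inversion Z4; subst. exfalso. apply (Hn z). rewrite <- H1. unfold pol. ring.
Qed.

Lemma root_between f x y : continuity f -> x < y -> f x * f y < 0 ->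
  exists z, x < z < y /\ f z = 0.
Proof.
  intros Hc Hxy Hm. destruct (IVT_cor f x y Hc (Rlt_le _ _ Hxy) (Rlt_le _ _ Hm)) as [z [Hz Hf]].
  exists z. split; auto. split.
  - destruct (Rle_lt_or_eq_dec _ _ (proj1 Hz)) as [h|h]; auto. subst. rewrite Hf in Hm. lra.
  - destruct (Rle_lt_or_eq_dec _ _ (proj2 Hz)) as [h|h]; auto. subst. rewrite Hf in Hm. lra.
Qed.

Lemma g_nonneg a : 0 < a -> 0 <= 3*a - 4*sin a + sin a * cos a.
Proof.
  intros Ha.
  destruct (MVT_cor2 (fun t => 3*t - 4*sin t + sin t * cos t) _ 0 a Ha (fun c _ => g_deriv c))
    as [c [Hc _]].
  rewrite sin_0, cos_0 in Hc.
  assert (E: 3 - 4 * cos c + cos c * cos c - sin c * sin c = 2 * (cos c - 1)^2).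
  { pose proof (sin2_cos2 c). unfold Rsqr in H. nra. }
  rewrite E in Hc. assert (0 <= 2 * (cos c - 1)^2 * (a - 0)) by (apply Rmult_le_pos; nra).
  lra.
Qed.

Lemma dmax_bound a : 0 < a <= PI / 2 -> 10/3 <= dmax a ^ 2.
Proof.
  intros [h1 h2].
  assert (hpi := PI_RGT_0).
  assert (hs : 0 < sin a) by (apply sin_gt_0; lra).
  assert (hh : 0 < sin (a/2)) by (apply sin_gt_0; lra).
  assert (hsx := sin_lt_x a h1).
  assert (hc : cos a = 1 - 2 * sin (a/2) * sin (a/2)).
  { rewrite <- cos_2a_sin. f_equal. field. }
  assert (hg := g_nonneg a h1).
  unfold dmax, csc.
  rewrite Rpow_mult_distr, <- Rsqr_pow2 with (x := sqrt _), Rsqr_sqrt.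
  2:{ apply Rmult_le_pos; [lra|]. replace (a * / sin a - 1) with ((a - sin a) * / sin a) by (field; lra).
      apply Rmult_le_pos; [lra| left; apply Rinv_0_lt_compat; lra]. }
  set (h := sin (a/2)) in *. set (s := sin a) in *. rewrite hc in hg.
  assert (E : (/ h)^2 * (5 * (a * / s - 1)) = 5 * (a - s) / (s * h^2)) by (field; lra).
  rewrite E. apply Rmult_le_reg_r with (s * h^2). { apply Rmult_lt_0_compat; nra. }
  replace (5 * (a - s) / (s * h ^ 2) * (s * h ^ 2)) with (5 * (a - s)) by (field; split; lra).
  nra.
Qed.

Lemma q_factor x : q x = (x - 1)^2 * (x^4 - 6*x^3 + 24*x^2 - 80*x + 100).
Proof. unfold q. ring. Qed.

Lemma r_pos_low x : x <= 1 -> 0 < x^4 - 6*x^3 + 24*x^2 - 80*x + 100.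
Proof.
  intros H. set (t := 2 - x). assert (x = 2 - t) by (unfold t; ring).
  rewrite H0. assert (1 <= t) by (unfold t; lra).
  replace ((2 - t) ^ 4 - 6 * (2 - t) ^ 3 + 24 * (2 - t) ^ 2 - 80 * (2 - t) + 100)
    with (4 + 24*t + t^2 * ((t-1)^2 + 11)) by ring.
  assert (0 <= t^2 * ((t-1)^2 + 11)) by (apply Rmult_le_pos; nra). lra.
Qed.

Lemma r_pos_high x : 10/3 <= x -> 0 < x^4 - 6*x^3 + 24*x^2 - 80*x + 100.
Proof.
  intros H. set (t := x - 10/3). assert (x = 10/3 + t) by (unfold t; ring).
  rewrite H0. assert (0 <= t) by (unfold t; lra).
  replace ((10/3 + t) ^ 4 - 6 * (10/3 + t) ^ 3 + 24 * (10/3 + t) ^ 2 - 80 * (10/3 + t) + 100)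
    with (100/81 + 760/27*t + 92/3 * t^2 + 22/3 * t^3 + t^4) by field.
  assert (0 <= t^2) by nra. assert (0 <= t^3) by (simpl; nra). assert (0 <= t^4) by (simpl; nra).
  lra.
Qed.

Lemma q_root_pos x : q x = 0 -> x <> 1 -> 1 < x < 10/3.
Proof.
  intros H1 H2. rewrite q_factor in H1.
  apply Rmult_integral in H1 as [H|H].
  - exfalso. apply H2. assert (HH : (x-1)*(x-1) = 0) by (simpl in H; lra). apply Rmult_integral in HH; lra.
  - destruct (Rle_or_lt x 1) as [h|h]; [pose proof (r_pos_low x h); lra|].
    destruct (Rle_or_lt (10/3) x) as [h'|h']; [pose proof (r_pos_high x h'); lra|]. lra.
Qed.

Section Main.
Variable a : R.
Definition cfs := (- 1800 * (6 * a + 8 * a * cos a - 2 * sin a * (3 * cos a + 4)) ^ 2,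
  13440 * (a - sin a) * sin a ^ 5 * (csc (a / 2)) ^ 2,
  96 * sin a ^ 3 * (- 160 * a + 99 * sin a + 80 * sin (2 * a) + 7 * sin (3 * a) - 120 * a * cos a),
  - 96 * sin a ^ 3 * (- 40 * a + 9 * sin a + 20 * sin (2 * a) + 7 * sin (3 * a) - 30 * a * cos a)).
End Main.

Lemma p_pol a : p a = pol (fst (fst (fst (cfs a)))) (snd (fst (fst (cfs a))))
   (snd (fst (cfs a))) (snd (cfs a)) (- 1184 * sin a ^ 6) (256 * sin a ^ 6) (- 32 * sin a ^ 6).
Proof. extensionality x. unfold p, pol, cfs; simpl. ring. Qed.

Lemma p_few a : 0 < sin a -> forall l, NoDup l -> List.Forall (fun x => p a x = 0) l -> (length l <= 4)%nat.
Proof.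
  intros hs l Hl Hz. rewrite p_pol in Hz. eapply pol_few; [|exact Hl|exact Hz].
  intros x. assert (0 < sin a ^ 6) by (apply pow_lt; auto).
  assert (0 < 28416 - 30720*x + 11520*x^2).
  { assert (0 <= (x - 4/3)^2) by (apply pow2_ge_0). nra. }
  replace (24 * (-1184 * sin a ^ 6) + 120 * (256 * sin a ^ 6) * x + 360 * (-32 * sin a ^ 6) * x ^ 2)
    with (- (sin a ^ 6 * (28416 - 30720*x + 11520*x^2))) by ring.
  assert (0 < sin a ^ 6 * (28416 - 30720*x + 11520*x^2)) by (apply Rmult_lt_0_compat; auto). lra.
Qed.

Lemma p_cont a : continuity (p a).
Proof.
  rewrite p_pol. intros x. apply derivable_continuous_pt. eexists. apply pol_deriv.
Qed.

Theorem lemma5 (a x3 x4 : R) (ha : 0 < a <= PI / 2)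
  (hx3 : q x3 = 0) (hx4 : q x4 = 0) (hx3n1 : x3 <> 1) (hx4n1 : x4 <> 1)
  (hx34 : x3 < x4) :
  (forall l : list R, NoDup l -> Forall (zero_in a) l -> (length l <= 4)%nat) /\
  (let y := fun i : nat =>
       match i with 0%nat => 0 | 1%nat => 1 | 2%nat => x3 | 3%nat => x4
                  | _ => dmax a ^ 2 end in
   (forall i : nat, (i < 4)%nat -> p a (y i) * p a (y (S i)) < 0) ->
   exists l : list R, NoDup l /\ length l = 4%nat /\
     forall x, In x l <-> zero_in a x).
Proof.
  assert (hpi := PI_RGT_0).
  assert (hs : 0 < sin a) by (apply sin_gt_0; lra).
  assert (P1 : forall l : list R, NoDup l -> Forall (zero_in a) l -> (length l <= 4)%nat).
  { intros l Hl Hz. apply (p_few a hs l Hl). rewrite List.Forall_forall in *.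
    intros x Hx. apply Hz, Hx. }
  split; [exact P1|].
  intros y Hy.
  destruct (q_root_pos x3 hx3 hx3n1) as [h31 h32].
  destruct (q_root_pos x4 hx4 hx4n1) as [h41 h42].
  assert (hD := dmax_bound a ha).
  pose proof (Hy 0%nat ltac:(lia)) as Y0.
  pose proof (Hy 1%nat ltac:(lia)) as Y1.
  pose proof (Hy 2%nat ltac:(lia)) as Y2.
  pose proof (Hy 3%nat ltac:(lia)) as Y3.
  simpl in Y0, Y1, Y2, Y3.
  destruct (root_between (p a) 0 1 (p_cont a) ltac:(lra) Y0) as [r1 [R1 Z1]].
  destruct (root_between (p a) 1 x3 (p_cont a) ltac:(lra) Y1) as [r2 [R2 Z2]].
  destruct (root_between (p a) x3 x4 (p_cont a) ltac:(lra) Y2) as [r3 [R3 Z3]].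
  destruct (root_between (p a) x4 (dmax a ^ 2) (p_cont a) ltac:(lra) Y3) as [r4 [R4 Z4]].
  assert (ZL : Forall (zero_in a) (r1 :: r2 :: r3 :: r4 :: nil)).
  { repeat constructor; unfold zero_in; auto; lra. }
  assert (ND : NoDup (r1 :: r2 :: r3 :: r4 :: nil)).
  { repeat constructor; simpl; intros HH; repeat destruct HH as [HH|HH]; lra. }
  exists (r1 :: r2 :: r3 :: r4 :: nil). split; [exact ND|]. split; [reflexivity|].
  intros x. split.
  - intros Hx. rewrite List.Forall_forall in ZL. apply ZL, Hx.
  - intros Hx. destruct (In_dec Req_dec_T x (r1 :: r2 :: r3 :: r4 :: nil)) as [i|n]; auto.
    exfalso. assert (length (x :: r1 :: r2 :: r3 :: r4 :: nil) <= 4)%nat.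
    { apply P1; constructor; auto. }
    simpl in H. lia.
Qed.
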